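(* Let $\ell\in\mathbb{R}$ and $p\in(0,1)$, and let $\tilde X$ be drawn with probability $p$ from the law of $X\sim N(0,1)$ conditioned on $X>\ell$, and with probability $1-p$ from the law of $X\sim N(0,1)$ conditioned on $X\le\ell$. Then for every $t>0$, $\Pr[|\tilde X|>t]\le2\exp(-t^2/K_1^2)$ where $K_1=\max\{\sqrt{20},|\ell|\sqrt{10}\}$. In particular, $\|\tilde X\|_{\psi_2}=O(\max\{1,|\ell|\})$.
   Context: The subgaussian norm is $\|X\|_{\psi_2}:=\inf\{t>0:\mathbb{E}[\exp(X^2/t^2)]\le2\}$. *)

(* Defs.v *)
From HB Require Import structures.
From mathcomp Require Import all_boot all_order all_algebra.
From mathcomp Require Import all_classical all_reals all_analysis.
Set Implicit Arguments. Unset Strict Implicit. Unset Printing Implicit Defensive.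
Import Order.TTheory GRing.Theory Num.Theory.
Local Open Scope classical_set_scope.
Local Open Scope ring_scope.

Definition gauss {R : realType} : set R -> \bar R := normal_prob 0 1.

Definition cond_gauss {R : realType} (B A : set R) : R :=
  fine (gauss (A `&` B)) / fine (gauss B).

Definition cond_gauss_expect {R : realType} (B : set R) (g : R -> R) : \bar R :=
  ((fine (gauss B))^-1%:E * \int[@gauss R]_(x in B) (g x)%:E)%E.

Definition above {R : realType} (l : R) : set R := `]l, +oo[.
Definition below {R : realType} (l : R) : set R := `]-oo, l].

Definition tilde_law {R : realType} (l p : R) (A : set R) : R :=
  p * cond_gauss (above l) A + (1 - p) * cond_gauss (below l) A.

Definition tilde_expect {R : realType} (l p : R) (g : R -> R) : \bar R :=
  (p%:E * cond_gauss_expect (above l) g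
   + (1 - p)%:E * cond_gauss_expect (below l) g)%E.

(* Subgaussian norm of tilde X:  inf { t > 0 : E[exp(tildeX^2/t^2)] <= 2 }
   (taken in \bar R, so it is +oo if the set is empty). *)
Definition tilde_psi2 {R : realType} (l p : R) : \bar R :=
  ereal_inf [set t%:E | t in [set t : R | 0 < t /\
     (tilde_expect l p (fun x => expR (x ^+ 2 / t ^+ 2)) <= 2%:E)%E]].

Definition K1 {R : realType} (l : R) : R :=
  Num.max (Num.sqrt 20) (`|l| * Num.sqrt 10).

(* Main.v *)
Require Import Defs.
From HB Require Import structures.
From mathcomp Require Import all_boot all_order all_algebra.
From mathcomp Require Import all_classical all_reals all_analysis.
From mathcomp Require Import measurable_realfun normal_distribution.
From mathcomp Require Import ring lra.
Import Order.TTheory GRing.Theory Num.Theory.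
Import numFieldTopology.Exports.
Local Open Scope classical_set_scope.
Local Open Scope ring_scope.

Local Notation mu := lebesgue_measure.

Lemma affine_derive {R : realType} (c d : R) : (fun z : R => c * z + d)^`()%classic = cst c.
Proof.
apply/funext => x; rewrite derive1E deriveD// deriveM// derive_cst derive_id.
rewrite scaler0 addr0 derive_cst addr0 /=; exact: mulr1.
Qed.

Lemma cont_G {R : realType} (a : R) : continuous (fun x : R => expR (- a * x ^+ 2)).
Proof.
move=> x; apply: continuous_comp; last exact: continuous_expR.
apply: cvgM; first exact: cvg_cst.
exact: exprn_continuous.
Qed.

Lemma subst_core {R : realType} (k a l c : R) : 0 <= k -> 0 < c ->
  (\int[mu]_(x in `[l, +oo[) (k * expR (- a * x ^+ 2))%:E =
  \int[mu]_(x in `[l, +oo[) (k * expR (- a * (c * x + (l - c * l)) ^+ 2) * c)%:E)%E.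
Proof.
move=> k0 c0.
set F := fun z : R => c * z + (l - c * l).
have Fl : F l = l by rewrite /F addrC subrK.
have FE := affine_derive c (l - c * l).
rewrite -[in LHS]Fl.
rewrite (@increasing_ge0_integration_by_substitutiony _ F (fun x => k * expR (- a * x ^+ 2)) l).
- apply: eq_integral => x _; rewrite FE //.
- move=> x y _ _ xy; rewrite /F ltrD2r ltr_pM2l //.
- by rewrite FE => x _; exact: cst_continuous.
- by rewrite FE; exact: is_cvg_cst.
- by rewrite FE; exact: is_cvg_cst.
- split.
  + move=> x _; rewrite /F. by [].
  + apply: cvg_at_right_filter. apply: continuousD; [apply: continuousM; [exact: cst_continuous|exact: cvg_id] | exact: cst_continuous].
- have -> : F = fun x => c * (x + (l - c * l) / c).
    by apply/funext => x; rewrite /F mulrDr mulrCA divff ?mulr1 ?gt_eqF.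
  by apply: gt0_cvgMry => //; exact: cvg_addrr.
- apply: continuous_subspaceT => x; apply: cvgM; [exact: cvg_cst | exact: cont_G].
- by move=> x _; rewrite mulr_ge0 // expR_ge0.
Qed.

Lemma pdfE {R : realType} (x : R) : normal_pdf 0 1 x = normal_peak 1 * expR (- 2^-1 * x ^+ 2).
Proof.
rewrite /normal_pdf oner_eq0 /= /normal_fun subr0 expr1n mulNr.
by congr (_ * expR _); rewrite mulNr mulrC.
Qed.

Lemma mcont {R : realType} (D : set R) (f : R -> R) : continuous f ->
  measurable_fun D (EFin \o f).
Proof.
move=> cf; apply/measurable_EFinP; apply: measurable_funTS.
exact: continuous_measurable_fun.
Qed.

Lemma cont_pdf {R : realType} : continuous (normal_pdf (0:R) 1).
Proof. by apply: continuous_normal_pdf; rewrite oner_eq0. Qed.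

Lemma cont_epdf {R : realType} (lam : R) : continuous (fun x : R => expR (lam * x ^+ 2) * normal_pdf 0 1 x).
Proof.
move=> x; apply: cvgM; last exact: cont_pdf.
by have := cont_G (- lam) x; rewrite opprK.
Qed.

Lemma core_itv {R : realType} (lam l : R) : 0 <= lam <= 10^-1 -> lam * l ^+ 2 <= 5^-1 ->
  (\int[mu]_(x in `[l, +oo[) (expR (lam * x ^+ 2) * normal_pdf 0 1 x)%:E <=
   4%:E * \int[mu]_(x in `[l, +oo[) (normal_pdf 0 1 x)%:E)%E.
Proof.
move=> /andP[lam0 lam1] laml.
set k := normal_peak (1:R).
have k0 : 0 <= k by exact: normal_peak_ge0.
set a := 2^-1 - lam.
set c := (1 - 2 * lam)^-1.
have c0 : 0 < c by rewrite invr_gt0; lra.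
have c1 : c * (1 - 2 * lam) = 1 by rewrite mulVf //; apply/eqP; lra.
have cge1 : 1 <= c.
  by rewrite -[leLHS]c1 ler_piMr //; lra.
have cle : c <= 5 / 4.
  by nra.
have E1 : (\int[mu]_(x in `[l, +oo[) (expR (lam * x ^+ 2) * normal_pdf 0 1 x)%:E =
    \int[mu]_(x in `[l, +oo[) ((k * expR (- a * x ^+ 2)))%:E)%E.
  apply: eq_integral => x _; rewrite pdfE mulrCA -expRD; congr (_ * expR _)%:E.
  rewrite /a; ring.
rewrite E1 (subst_core k a l c k0 c0).
set M := c * expR (lam * l ^+ 2).
have pw x : l <= x -> k * expR (- a * (c * x + (l - c * l)) ^+ 2) * c <= M * normal_pdf 0 1 x.
  move=> lx; rewrite pdfE /M.
  have ex : expR (- a * (c * x + (l - c * l)) ^+ 2) <= expR (lam * l ^+ 2) * expR (- 2^-1 * x ^+ 2).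
    rewrite -expRD ler_expR.
    have key : forall y, 0 <= y -> - a * (l + c * y) ^+ 2 <= lam * l ^+ 2 + - 2^-1 * (l + y) ^+ 2.
      move=> y y0; rewrite /a.
      have h1 : (1 - 2 * lam) * c * l * y = l * y by rewrite (mulrC (1 - _)) c1 mul1r.
      have h2 : (1 - 2 * lam) * c * c * y ^+ 2 = c * y ^+ 2 by rewrite (mulrC (1 - _)) c1 mul1r.
      have h3 : 0 <= (c - 1) * y ^+ 2 by rewrite mulr_ge0 // ?sqr_ge0 // subr_ge0.
      nra.
    have := key (x - l); rewrite subr_ge0 => /(_ lx).
    have -> : l + c * (x - l) = c * x + (l - c * l) by ring.
    by rewrite subrKC.
  have kc : 0 <= k * c by rewrite mulr_ge0 // ltW.
  have := ler_wpM2l kc ex.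
  set e1 := expR _; set E := expR _; set F := expR _.
  have -> : k * e1 * c = (k * c) * e1 by ring.
  have -> : c * E * (k * F) = (k * c) * (E * F) by ring.
  by [].
have M0 : 0 <= M by rewrite mulr_ge0 ?expR_ge0 // ltW.
have M4 : M <= 4.
  have h : 1 + - 5^-1 <= expR (- 5^-1 : R) by exact: expR_ge1Dx.
  rewrite expRN in h.
  have e0 : 0 < expR (5^-1 : R) by exact: expR_gt0.
  have ee : expR (5^-1 : R) * (expR (5^-1 : R))^-1 = 1 by rewrite divff // gt_eqF.
  have e2 : expR (lam * l ^+ 2) <= expR (5^-1 : R) by rewrite ler_expR.
  have e3 : 0 <= expR (lam * l ^+ 2) by exact: expR_ge0.
  rewrite /M; nra.
apply: (@le_trans _ _ (\int[mu]_(x in `[l, +oo[) (M * normal_pdf 0 1 x)%:E)%E).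
  apply: ge0_le_integral => //.
  - move=> x _; rewrite lee_fin; apply: mulr_ge0; last exact: ltW.
    by rewrite mulr_ge0 // expR_ge0.
  - apply: mcont => x; apply: cvgM; last exact: cvg_cst.
    apply: cvgM; first exact: cvg_cst.
    apply: (@continuous_comp _ _ _ (fun x : R => c * x + (l - c * l)) (fun y => expR (- a * y ^+ 2))); last exact: cont_G.
    apply: cvgD; [apply: cvgM; [exact: cvg_cst | exact: cvg_id] | exact: cvg_cst].
  - apply: mcont => x; apply: cvgM; [exact: cvg_cst | exact: cont_pdf].
  - by move=> x; rewrite /= in_itv /= andbT => lx; rewrite lee_fin pw.
under eq_integral do rewrite EFinM.
rewrite ge0_integralZl_EFin //; last exact: mcont cont_pdf.
apply: lee_wpmul2r; first by apply: integral_ge0 => x _; rewrite lee_fin normal_pdf_ge0.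
by rewrite lee_fin.
by move=> x _; rewrite lee_fin normal_pdf_ge0.
Qed.


Lemma pdfN {R : realType} (x : R) : normal_pdf 0 1 (- x) = normal_pdf 0 1 x.
Proof. by rewrite !pdfE sqrrN. Qed.

Lemma core_above {R : realType} (lam l : R) : 0 <= lam <= 10^-1 -> lam * l ^+ 2 <= 5^-1 ->
  (\int[mu]_(x in above l) (expR (lam * x ^+ 2) * normal_pdf 0 1 x)%:E <=
   4%:E * \int[mu]_(x in above l) (normal_pdf 0 1 x)%:E)%E.
Proof.
move=> h1 h2; rewrite /above.
rewrite !integral_itv_obnd_cbnd; first exact: core_itv.
- exact: mcont cont_pdf.
- exact: mcont (cont_epdf lam).
Qed.

Lemma core_below {R : realType} (lam l : R) : 0 <= lam <= 10^-1 -> lam * l ^+ 2 <= 5^-1 ->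
  (\int[mu]_(x in below l) (expR (lam * x ^+ 2) * normal_pdf 0 1 x)%:E <=
   4%:E * \int[mu]_(x in below l) (normal_pdf 0 1 x)%:E)%E.
Proof.
move=> h1 h2; rewrite /below -[l]opprK.
rewrite !ge0_integration_by_substitutionNy.
- under eq_integral do rewrite /= pdfN sqrrN.
  under [X in (_ <= _ * X)%E]eq_integral do rewrite /= pdfN.
  by apply: core_itv; rewrite // sqrrN.
- exact: continuous_subspaceT cont_pdf.
- by move=> x _; exact: normal_pdf_ge0.
- exact: continuous_subspaceT (cont_epdf lam).
- by move=> x _; rewrite mulr_ge0 ?expR_ge0 ?normal_pdf_ge0.
Qed.

Lemma gaussE {R : realType} (V : set R) : gauss V = (\int[mu]_(x in V) (normal_pdf 0 1 x)%:E)%E.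
Proof. by []. Qed.

Lemma gauss_fin {R : realType} (V : set R) : measurable V -> (gauss V \is a fin_num)%E.
Proof.
move=> mV; rewrite ge0_fin_numE; last exact: measure_ge0.
by apply: (le_lt_trans (probability_le1 (@gauss R) mV)); rewrite ltry.
Qed.

Lemma measA {R : realType} (t : R) : measurable [set x : R | t < `|x|].
Proof.
have := normr_measurable measurableT (measurable_itv `]t, +oo[).
rewrite setTI; congr measurable; apply/seteqP; split => x /=;
  by rewrite in_itv /= andbT.
Qed.

Lemma cond_ge0 {R : realType} (B A : set R) : 0 <= cond_gauss B A.
Proof.
rewrite /cond_gauss divr_ge0 // fine_ge0 // measure_ge0.
Qed.

Lemma cond_le1 {R : realType} (B A : set R) : measurable B -> measurable A -> cond_gauss B A <= 1.
Proof.
move=> mB mA; rewrite /cond_gauss.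
have [->|gB0] := eqVneq (fine (gauss B)) 0; first by rewrite invr0 mulr0.
have gB : 0 < fine (gauss B) by rewrite lt_neqAle eq_sym gB0 fine_ge0 // measure_ge0.
rewrite ler_pdivrMr // mul1r fine_le //; [exact: gauss_fin (measurableI _ _ mA mB)| exact: gauss_fin|].
exact: measureIr.
Qed.

Lemma markov_B {R : realType} (B : set R) (lam t : R) : measurable B -> 0 <= lam -> 0 <= t ->
  (\int[mu]_(x in B) (expR (lam * x ^+ 2) * normal_pdf 0 1 x)%:E <=
   4%:E * \int[mu]_(x in B) (normal_pdf 0 1 x)%:E)%E ->
  cond_gauss B [set x | t < `|x|] <= 4 * expR (- lam * t ^+ 2).
Proof.
move=> mB lam0 t0 core; rewrite /cond_gauss.
set A := [set x : R | t < `|x|].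
have mA : measurable A by exact: measA.
have [->|gB0] := eqVneq (fine (gauss B)) 0.
  by rewrite invr0 mulr0 mulr_ge0 ?expR_ge0.
have gB : 0 < fine (gauss B) by rewrite lt_neqAle eq_sym gB0 fine_ge0 // measure_ge0.
rewrite ler_pdivrMr //.
have key : (gauss (A `&` B) <= (4 * expR (- lam * t ^+ 2))%:E * gauss B)%E.
  rewrite !gaussE.
  apply: (@le_trans _ _ (\int[mu]_(x in A `&` B) (expR (- lam * t ^+ 2) * (expR (lam * x ^+ 2) * normal_pdf 0 1 x))%:E)%E).
    apply: ge0_le_integral => //.
    - exact: measurableI.
    - by move=> x _; rewrite lee_fin normal_pdf_ge0.
    - exact: mcont cont_pdf.
    - apply: mcont => x; apply: cvgM; [exact: cvg_cst | exact: cont_epdf].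
    - move=> x [/= tx _]; rewrite lee_fin mulrA -expRD.
      rewrite -[leLHS]mul1r ler_wpM2r ?normal_pdf_ge0 // -expR0 ler_expR.
      have := real_normK (num_real x).
      have := normr_ge0 x.
      move=> h1 h2; have tx2 : t < `|x| by exact: tx.
      have h3 : t ^+ 2 <= x ^+ 2 by rewrite -h2; nra.
      nra.
  apply: (@le_trans _ _ (\int[mu]_(x in B) (expR (- lam * t ^+ 2) * (expR (lam * x ^+ 2) * normal_pdf 0 1 x))%:E)%E).
    apply: ge0_subset_integral => //.
    - exact: measurableI.
    - apply: mcont => x; apply: cvgM; [exact: cvg_cst | exact: cont_epdf].
    - by move=> x _; rewrite lee_fin !mulr_ge0 ?expR_ge0 ?normal_pdf_ge0.
  under eq_integral do rewrite EFinM.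
  rewrite ge0_integralZl_EFin ?expR_ge0 //; last exact: mcont (cont_epdf lam).
  rewrite EFinM (muleC 4%:E) -muleA.
  by apply: lee_wpmul2l => //; rewrite lee_fin expR_ge0.

  by move=> x _; rewrite lee_fin mulr_ge0 ?expR_ge0 ?normal_pdf_ge0.
rewrite -lee_fin EFinM !fineK //; [exact: gauss_fin | exact: gauss_fin (measurableI _ _ mA mB)].
Qed.

Lemma K1_sq {R : realType} (l : R) : 20 <= K1 l ^+ 2 /\ 10 * l ^+ 2 <= K1 l ^+ 2.
Proof.
rewrite /K1.
have s20 : Num.sqrt (20 : R) ^+ 2 = 20 by rewrite sqr_sqrtr.
have s10 : Num.sqrt (10 : R) ^+ 2 = 10 by rewrite sqr_sqrtr.
have a0 : 0 <= Num.sqrt (20 : R) by exact: sqrtr_ge0.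
have b0 : 0 <= `|l| * Num.sqrt 10 by rewrite mulr_ge0 ?sqrtr_ge0.
have m1 : Num.sqrt (20 : R) <= Num.max (Num.sqrt (20 : R)) (`|l| * Num.sqrt 10) by rewrite le_max lexx.
have m2 : `|l| * Num.sqrt 10 <= Num.max (Num.sqrt (20 : R)) (`|l| * Num.sqrt 10) by rewrite le_max lexx orbT.
set M := Num.max _ _ in m1 m2 *.
have ll : `|l| ^+ 2 = l ^+ 2 := real_normK (num_real l).
split.
  rewrite -s20; rewrite ler_sqr ?nnegrE //; exact: le_trans a0 m1.
have -> : 10 * l ^+ 2 = (`|l| * Num.sqrt 10) ^+ 2 by rewrite exprMn s10 ll mulrC.
rewrite ler_sqr ?nnegrE //; exact: le_trans b0 m2.
Qed.

Lemma part1 {R : realType} (l p t : R) : 0 < p < 1 -> 0 < t ->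
  tilde_law l p [set x | t < `|x|] <= 2 * expR (- t ^+ 2 / K1 l ^+ 2).
Proof.
move=> /andP[p0 p1] t0.
have [K20 K10] := K1_sq l.
set K2 := K1 l ^+ 2 in K20 K10 *.
have K0 : 0 < K2 by lra.
set lam := 2 / K2.
have lam0 : 0 <= lam by rewrite divr_ge0 // ltW.
have iK : K2 * K2^-1 = 1 by rewrite divff // gt_eqF.
have iK0 : 0 < K2^-1 by rewrite invr_gt0.
have lam1 : lam <= 10^-1 by rewrite /lam; nra.
have lam2 : lam * l ^+ 2 <= 5^-1 by rewrite /lam; nra.
have lam3 : 0 <= lam <= 10^-1 by rewrite lam0 lam1.
set s := expR (- t ^+ 2 / K2).
have s0 : 0 < s by exact: expR_gt0.
have es : expR (- lam * t ^+ 2) = s * s.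
  by rewrite -expRD; congr expR; rewrite /lam; field; lra.
set A := [set x : R | t < `|x|].
have mA : measurable A by exact: measA.
have cb (B : set R) : measurable B -> 
   (\int[mu]_(x in B) (expR (lam * x ^+ 2) * normal_pdf 0 1 x)%:E <=
   4%:E * \int[mu]_(x in B) (normal_pdf 0 1 x)%:E)%E ->
   cond_gauss B A <= 2 * s.
  move=> mB core.
  have h1 := cond_le1 B A mB mA.
  have h2 := markov_B B lam t mB lam0 (ltW t0) core.
  rewrite es in h2.
  have [sh|sh] := leP s (2^-1); nra.
have c1 := cb _ (measurable_itv _) (core_above lam l lam3 lam2).
have c2 := cb _ (measurable_itv _) (core_below lam l lam3 lam2).
have g1 := cond_ge0 (above l) A.
have g2 := cond_ge0 (below l) A.
rewrite /tilde_law; nra.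
Qed.

Lemma int_gaussT {R : realType} (B : set R) (f : R -> \bar R) : measurable B ->
  measurable_fun B f -> (forall x, 0 <= f x)%E ->
  (\int[@gauss R]_(x in B) f x = \int[normal_prob (0:R) 1]_(x in B) f x)%E.
Proof.
move=> mB mf f0.
have mid : measurable_fun (T:=measurableTypeR R) (U:=R) setT (fun x => x).
  by move=> _ A mA; rewrite setTI.
have := @ge0_integral_pushforward _ _ (measurableTypeR R) R R (fun x => x) mid (normal_prob 0 1) B f mB mf (fun y _ => f0 y).
move=> H.
exact: H.
Qed.

Lemma int_gauss {R : realType} (B : set R) (f : R -> \bar R) : measurable B ->
  (forall x, 0 <= f x)%E -> measurable_fun B f ->
  (\int[normal_prob (0:R) 1]_(x in B) f x = \int[mu]_(x in B) (f x * (normal_pdf 0 1 x)%:E))%E.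
Proof.
move=> mB f0 mf.
have numu : (normal_prob (0:R) 1) `<< mu by exact: normal_prob_dominates.
rewrite -(Radon_Nikodym_SigmaFinite.change_of_variables numu f0 mB mf).
set RN := Radon_Nikodym_SigmaFinite.f _ _.
have mRN : measurable_fun B RN.
  apply: measurable_funTS.
  exact: measurable_int (Radon_Nikodym_SigmaFinite.f_integrable numu).
have mpdf : measurable_fun B (fun x => (normal_pdf 0 1 x)%:E).
  exact: mcont cont_pdf.
apply: ae_eq_integral => //.
- exact: emeasurable_funM.
- exact: emeasurable_funM.
apply: ae_eqe_mul2l.
apply: integral_ae_eq => //.
- apply: (integrableS measurableT) => //.
  exact: Radon_Nikodym_SigmaFinite.f_integrable.
- move=> E EB mE.
  by rewrite -(Radon_Nikodym_SigmaFinite.f_integral numu mE).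
Qed.

Lemma y4 {R : realType} (y : R) : 0 <= y -> y <= 1 + y ^+ 4 / 4.
Proof.
move=> y0.
have h : 0 <= (y - 1) ^+ 2 * (y ^+ 2 + 2 * y + 3) by rewrite mulr_ge0 ?sqr_ge0 //; nra.
nra.
Qed.

Lemma expect_B {R : realType} (B : set R) (u : R) : measurable B -> 0 <= u ->
  (\int[mu]_(x in B) (expR ((4 * u) * x ^+ 2) * normal_pdf 0 1 x)%:E <=
   4%:E * \int[mu]_(x in B) (normal_pdf 0 1 x)%:E)%E ->
  (cond_gauss_expect B (fun x => expR (x ^+ 2 * u)) <= 2%:E)%E.
Proof.
move=> mB u0 core; rewrite /cond_gauss_expect.
have [->|gB0] := eqVneq (fine (gauss B)) 0.
  by rewrite invr0 mul0e lee_fin.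
have gB : 0 < fine (gauss B) by rewrite lt_neqAle eq_sym gB0 fine_ge0 // measure_ge0.
have gBf := gauss_fin B mB.
have mg : measurable_fun B (fun x => (expR (x ^+ 2 * u))%:E).
  apply: mcont => x; apply: continuous_comp; last exact: continuous_expR.
  by apply: cvgM; [exact: exprn_continuous | exact: cvg_cst].
have g0 : forall x, (0 <= (expR (x ^+ 2 * u))%:E)%E by move=> x; rewrite lee_fin expR_ge0.
rewrite int_gaussT // int_gauss //.
set I := (\int[mu]_(x in B) _)%E.
have I0 : (0 <= I)%E.
  by apply: integral_ge0 => x _; rewrite -EFinM lee_fin mulr_ge0 ?expR_ge0 ?normal_pdf_ge0.
have Ile : (I <= 2%:E * gauss B)%E.
  rewrite /I.
  apply: (@le_trans _ _ (\int[mu]_(x in B) ((normal_pdf 0 1 x)%:E + 4^-1%:E * (expR ((4 * u) * x ^+ 2) * normal_pdf 0 1 x)%:E))%E).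
    apply: ge0_le_integral => //.
    - by move=> x _; rewrite -EFinM lee_fin mulr_ge0 ?expR_ge0 ?normal_pdf_ge0.
    - apply: emeasurable_funM => //; exact: mcont cont_pdf.
    - apply: emeasurable_funD; first exact: mcont cont_pdf.
      apply: emeasurable_funM; first exact: measurable_cst.
      exact: mcont (cont_epdf _).
    - move=> x _; rewrite -EFinM -EFinM -EFinD lee_fin.
      have := y4 (expR (x ^+ 2 * u)) (expR_ge0 _).
      rewrite -expRM_natl.
      have -> : (4%:R * (x ^+ 2 * u)) = 4 * u * x ^+ 2 by ring.
      have := normal_pdf_ge0 0 1 x.
      nra.
  rewrite ge0_integralD //.
  - rewrite ge0_integralZl_EFin //.
    + rewrite -gaussE.
      move: core; rewrite -gaussE.
      set J := (\int[mu]_(x in B) _)%E => Jle.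
      have J0 : (0 <= J)%E.
        by apply: integral_ge0 => x _; rewrite lee_fin mulr_ge0 ?expR_ge0 ?normal_pdf_ge0.
      have Jf : J \is a fin_num.
        rewrite ge0_fin_numE //; apply: (le_lt_trans Jle).
        by rewrite -(fineK gBf) -EFinM ltry.
      move: Jle; rewrite -(fineK gBf) -(fineK Jf) -!EFinM -EFinD !lee_fin.
      lra.
    + by move=> x _; rewrite lee_fin mulr_ge0 ?expR_ge0 ?normal_pdf_ge0.
    + exact: mcont (cont_epdf _).
  - by move=> x _; rewrite lee_fin normal_pdf_ge0.
  - exact: mcont cont_pdf.
  - by move=> x _; rewrite mule_ge0 // lee_fin ?mulr_ge0 ?expR_ge0 ?normal_pdf_ge0.
  - apply: emeasurable_funM; first exact: measurable_cst.
    exact: mcont (cont_epdf _).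
have If : I \is a fin_num.
  rewrite ge0_fin_numE //; apply: (le_lt_trans Ile).
  by rewrite -(fineK gBf) -EFinM ltry.
move: Ile; rewrite -(fineK gBf) -(fineK If) -!EFinM !lee_fin => Ile.
by rewrite mulrC ler_pdivrMr.
Qed.

Lemma part2 {R : realType} (l p : R) : 0 < p < 1 ->
  (tilde_psi2 l p <= (7 * Num.max 1 `|l|)%:E)%E.
Proof.
move=> /andP[p0 p1].
set m := Num.max 1 `|l|.
have m1 : 1 <= m by rewrite le_max lexx.
have ml : `|l| <= m by rewrite le_max lexx orbT.
set t := 7 * m.
have t0 : 0 < t by rewrite /t; lra.
set u := (t ^+ 2)^-1.
have t2 : t ^+ 2 * u = 1 by rewrite divff // gt_eqF // exprn_gt0.
have u0 : 0 < u by rewrite invr_gt0 exprn_gt0.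
have ll : `|l| ^+ 2 = l ^+ 2 := real_normK (num_real l).
have l2 : l ^+ 2 <= m ^+ 2 by rewrite -ll ler_sqr ?nnegrE //; lra.
have lam1 : 0 <= 4 * u <= 10^-1.
  apply/andP; split; first lra.
  have : 49 <= t ^+ 2 by rewrite /t; nra.
  nra.
have lam2 : 4 * u * l ^+ 2 <= 5^-1.
  have : 49 * l ^+ 2 <= t ^+ 2 by rewrite /t; nra.
  nra.
have e1 := expect_B (above l) u (measurable_itv _) (ltW u0) (core_above _ l lam1 lam2).
have e2 := expect_B (below l) u (measurable_itv _) (ltW u0) (core_below _ l lam1 lam2).
apply: ereal_inf_lbound; exists t => //; split => //.
rewrite /tilde_expect.
apply: (le_trans (leeD (lee_wpmul2l _ e1) (lee_wpmul2l _ e2))).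
- by rewrite lee_fin; lra.
- by rewrite lee_fin; lra.
by rewrite -!EFinM -EFinD lee_fin; lra.
Qed.

Theorem lemma18 (R : realType) :
  (forall (l p t : R), 0 < p < 1 -> 0 < t ->
     tilde_law l p [set x | t < `|x|] <= 2 * expR (- t ^+ 2 / K1 l ^+ 2))
  /\
  (exists C : R, 0 < C /\ forall (l p : R), 0 < p < 1 ->
     (tilde_psi2 l p <= (C * Num.max 1 `|l|)%:E)%E).
Proof.
split; first exact: part1.
exists 7; split; first by [].
exact: part2.
Qed.
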